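(* Consider the problem $\min_{x\in\mathbb R^n} f(x)$ subject to $Ax=b$, where $f:\mathbb R^n\to\mathbb R$ is convex and continuously differentiable, $A\in\mathbb R^{m\times n}$, $b\in\mathbb R^m$, and assume the KKT set $\Omega$ is nonempty. Let $\{(x_k,\lambda_k)\}_{k\ge0}$ be generated by the accelerated augmented Lagrangian method described in the context (in either Case I or Case II). Then every cluster point of $\{(x_k,\lambda_k)\}_{k\ge0}$ belongs to $\Omega$.
   Context: The KKT set is $\Omega=\{(x^*,\lambda^* )\in\mathbb R^n\times\mathbb R^m: Ax^*=b,\ \nabla f(x^* )+A^\top\lambda^*=0\}$. Parameter sequence: $\{t_k\}_{k\ge1}$ is nondecreasing, $t_1=1$, $t_k>1$ for all $k>2$, $t_k\to+\infty$, and $t_{k+1}^2-t_k^2\le\rho t_{k+1}$ for all $k\ge 1$, with fixed $\rho\in(0,1]$. Fix $\eta\in[\rho,1]$, $\gamma>0$, $\delta>0$, $\beta\ge0$. Algorithm: initial points $x_0=x_1\in\mathbb R^n$, $\lambda_0=\lambda_1\in\mathbb R^m$. For $k=1,2,\dots$: set $\alpha_k=(t_{k+1}-\eta)/\eta$, $c_k=t_{k+1}/\eta$, $\bar x_k=x_k+\frac{t_k-1}{t_{k+1}}(x_k-x_{k-1})$, $\bar\lambda_k=\lambda_k+\frac{t_k-1}{t_{k+1}}(\lambda_k-\lambda_{k-1})$, $p_k=c_k\bar\lambda_k-\alpha_k\lambda_k$, $r_k=\alpha_kAx_k+b$. Case I ($f$ convex and $C^1$): $x_{k+1}=\arg\min_{x}\{f(x)+\frac\beta2\|Ax-b\|^2+\frac1{2\gamma}\|x-\bar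 x_k\|^2+\langle p_k,Ax-b\rangle+\frac\delta2\|c_kAx-r_k\|^2\}$. Case II ($f$ convex with $L$-Lipschitz gradient, and $\gamma\le 1/L$): $x_{k+1}=\arg\min_{x}\{\langle\nabla f(\bar x_k),x\rangle+\frac\beta2\|Ax-b\|^2+\frac1{2\gamma}\|x-\bar x_k\|^2+\langle p_k,Ax-b\rangle+\frac\delta2\|c_kAx-r_k\|^2\}$. Then $\lambda_{k+1}=\bar\lambda_k+\delta(c_kAx_{k+1}-r_k)$. *)

(* Defs.v *)
From HB Require Import structures.
From mathcomp Require Import all_boot all_order all_algebra.
From mathcomp Require Import all_classical all_reals all_analysis.
Set Implicit Arguments. Unset Strict Implicit. Unset Printing Implicit Defensive.
Import Order.TTheory GRing.Theory Num.Theory.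
Import numFieldNormedType.Exports.
Local Open Scope classical_set_scope.
Local Open Scope ring_scope.

Definition dotv (R : realType) (p : nat) (u v : 'cV[R]_p) : R :=
  \sum_(i < p) u i 0 * v i 0.

Definition sqn (R : realType) (p : nat) (u : 'cV[R]_p) : R := dotv u u.

Definition enorm (R : realType) (p : nat) (u : 'cV[R]_p) : R := Num.sqrt (sqn u).

Definition convex_fun (R : realType) (n : nat) (f : 'cV[R]_n -> R) : Prop :=
  forall (x y : 'cV[R]_n) (s : R), 0 <= s <= 1 ->
    f (s *: x + (1 - s) *: y) <= s * f x + (1 - s) * f y.

Definition C1_with_gradient (R : realType) (n : nat)
    (f : 'cV[R]_n -> R) (grad : 'cV[R]_n -> 'cV[R]_n) : Prop :=
  (forall x, differentiable f x /\ forall h, 'd f x h = dotv (grad x) h)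
  /\ continuous grad.

Definition KKT_set (R : realType) (n m : nat) (grad : 'cV[R]_n -> 'cV[R]_n)
    (A : 'M[R]_(m, n)) (b : 'cV[R]_m) (x : 'cV[R]_n) (l : 'cV[R]_m) : Prop :=
  A *m x = b /\ grad x + A^T *m l = 0.

(* parameter sequence assumptions (t is indexed from 1; t 0 is unused) *)
Definition param_seq (R : realType) (t : nat -> R) (rho : R) : Prop :=
  (forall k, (1 <= k)%N -> t k <= t k.+1) /\
  t 1%N = 1 /\
  (forall k, (2 < k)%N -> 1 < t k) /\
  (t @ \oo --> +oo) /\
  (forall k, (1 <= k)%N -> t k.+1 ^+ 2 - t k ^+ 2 <= rho * t k.+1).

Section Alg.
Variables (R : realType) (n m : nat) (A : 'M[R]_(m, n)) (b : 'cV[R]_m)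
  (t : nat -> R) (eta : R) (x : nat -> 'cV[R]_n) (lam : nat -> 'cV[R]_m).

Definition alpha k := (t k.+1 - eta) / eta.
Definition cc k := t k.+1 / eta.
Definition xbar k := x k + ((t k - 1) / t k.+1) *: (x k - x k.-1).
Definition lbar k := lam k + ((t k - 1) / t k.+1) *: (lam k - lam k.-1).
Definition pk k := cc k *: lbar k - alpha k *: lam k.
Definition rk k := alpha k *: (A *m x k) + b.

Definition obj1 (f : 'cV[R]_n -> R) (beta gamma delta : R) k (z : 'cV[R]_n) : R :=
  f z + beta / 2 * sqn (A *m z - b) + 1 / (2 * gamma) * sqn (z - xbar k)
  + dotv (pk k) (A *m z - b) + delta / 2 * sqn (cc k *: (A *m z) - rk k).

Definition obj2 (grad : 'cV[R]_n -> 'cV[R]_n) (beta gamma delta : R) k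
    (z : 'cV[R]_n) : R :=
  dotv (grad (xbar k)) z + beta / 2 * sqn (A *m z - b)
  + 1 / (2 * gamma) * sqn (z - xbar k)
  + dotv (pk k) (A *m z - b) + delta / 2 * sqn (cc k *: (A *m z) - rk k).

End Alg.

(* Main.v *)
Require Import Defs.
From HB Require Import structures.
From mathcomp Require Import all_boot all_order all_algebra.
From mathcomp Require Import all_classical all_reals all_analysis.
From mathcomp Require Import ring lra.
Import Order.TTheory GRing.Theory Num.Theory.
Import numFieldNormedType.Exports.
Local Open Scope classical_set_scope.
Local Open Scope ring_scope.

Set Implicit Arguments. Unset Strict Implicit. Unset Printing Implicit Defensive.

Section Dot.
Variables (R : realType) (p : nat).
Implicit Types u v w : 'cV[R]_p.

Lemma dotvC u v : dotv u v = dotv v u.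
Proof. by rewrite /dotv; apply: eq_bigr => i _; rewrite mulrC. Qed.
Lemma dotvDl u v w : dotv (u + v) w = dotv u w + dotv v w.
Proof. by rewrite /dotv -big_split; apply: eq_bigr => i _; rewrite mxE mulrDl. Qed.
Lemma dotvDr u v w : dotv w (u + v) = dotv w u + dotv w v.
Proof. by rewrite dotvC dotvDl !(dotvC w). Qed.
Lemma dotvZl a u v : dotv (a *: u) v = a * dotv u v.
Proof. by rewrite /dotv mulr_sumr; apply: eq_bigr => i _; rewrite mxE mulrA. Qed.
Lemma dotvZr a u v : dotv v (a *: u) = a * dotv v u.
Proof. by rewrite dotvC dotvZl dotvC. Qed.
Lemma dotvNl u v : dotv (- u) v = - dotv u v.
Proof. by rewrite -scaleN1r dotvZl mulN1r. Qed.
Lemma dotvNr u v : dotv v (- u) = - dotv v u.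
Proof. by rewrite dotvC dotvNl dotvC. Qed.
Lemma dotvBl u v w : dotv (u - v) w = dotv u w - dotv v w.
Proof. by rewrite dotvDl dotvNl. Qed.
Lemma dotvBr u v w : dotv w (u - v) = dotv w u - dotv w v.
Proof. by rewrite dotvDr dotvNr. Qed.
Lemma dotv0l v : dotv 0 v = 0.
Proof. by rewrite /dotv big1 // => i _; rewrite mxE mul0r. Qed.
Lemma dotv0r v : dotv v 0 = 0.
Proof. by rewrite dotvC dotv0l. Qed.

Lemma sqn_ge0 u : 0 <= sqn u.
Proof. by rewrite /sqn /dotv sumr_ge0 // => i _; rewrite -expr2 sqr_ge0. Qed.

Lemma sqn_eq0 u : sqn u = 0 -> u = 0.
Proof.
move=> h; apply/matrixP => i j; rewrite ord1 mxE.
have : \sum_(k < p) u k 0 * u k 0 = 0 by [].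
move/eqP; rewrite psumr_eq0; last by move=> k _; rewrite -expr2 sqr_ge0.
move/allP => /(_ i (mem_index_enum _)) /=.
by rewrite -expr2 sqrf_eq0 => /eqP.
Qed.

Lemma sqnE u : sqn u = dotv u u. Proof. by []. Qed.

Lemma sqnD u v : sqn (u + v) = sqn u + 2 * dotv u v + sqn v.
Proof. rewrite /sqn !dotvDl !dotvDr (dotvC v u); ring. Qed.
Lemma sqnB u v : sqn (u - v) = sqn u - 2 * dotv u v + sqn v.
Proof. rewrite /sqn !dotvDl !dotvDr !dotvNl !dotvNr (dotvC v u); ring. Qed.
Lemma sqnZ a u : sqn (a *: u) = a ^+ 2 * sqn u.
Proof. rewrite /sqn dotvZl dotvZr; ring. Qed.
Lemma sqnN u : sqn (- u) = sqn u.
Proof. by rewrite /sqn dotvNl dotvNr opprK. Qed.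

Lemma CS u v : dotv u v ^+ 2 <= sqn u * sqn v.
Proof.
have [h0|hpos] := eqVneq (sqn u) 0.
  by rewrite (sqn_eq0 h0) dotv0l /sqn dotv0l expr2 !mul0r.
have hp : 0 < sqn u by rewrite lt_def hpos sqn_ge0.
have := sqn_ge0 (sqn u *: v - dotv u v *: u).
rewrite sqnB !sqnZ dotvZl dotvZr (dotvC v u) => h.
have : 0 <= sqn u * (sqn u * sqn v - dotv u v ^+ 2) by rewrite /sqn in h *; nra.
by rewrite pmulr_rge0 // subr_ge0.
Qed.

Lemma dot_le u v : 2 * dotv u v <= sqn u + sqn v.
Proof. have := sqn_ge0 (u - v); rewrite sqnB; lra. Qed.

Lemma sqn_convex a u v : 0 <= a <= 1 ->
  sqn ((1 - a) *: u + a *: v) <= (1 - a) * sqn u + a * sqn v.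
Proof.
move=> /andP[a0 a1].
have := sqn_ge0 (u - v).
rewrite sqnB => h; rewrite sqnD !sqnZ dotvZl dotvZr.
have : 0 <= a * (1 - a) by rewrite mulr_ge0 // subr_ge0.
rewrite /sqn in h *; nra.
Qed.

Lemma dotv_mulmx q (M : 'M[R]_(q, p)) (u : 'cV[R]_q) v :
  dotv u (M *m v) = dotv (M^T *m u) v.
Proof.
rewrite /dotv.
have e1 : forall r (a b : 'cV[R]_r), \sum_(i < r) a i 0 * b i 0 = (a^T *m b) 0 0.
  by move=> r a b; rewrite mxE; apply: eq_bigr => i _; rewrite mxE.
by rewrite !e1 trmx_mul trmxK mulmxA.
Qed.
End Dot.

Section Ana.
Variable R : realType.

Lemma is_derive_of_cvg (phi : R -> R) (tau l : R) :
  (fun s => s^-1 * (phi (s + tau) - phi tau)) @ 0^' --> l -> is_derive tau 1 phi l.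
Proof.
move=> h.
have e : (fun s : R => s^-1 *: ((phi \o shift tau) (s *: 1) - phi tau))
       = (fun s => s^-1 * (phi (s + tau) - phi tau)).
  by apply: funext => s /=; rewrite [s *: 1]mulr1.
apply: DeriveDef; first by rewrite /derivable e; apply/cvg_ex; exists l.
by rewrite /derive e; apply: cvg_lim.
Qed.

Lemma dright (g : R -> R) (l : R) : g x @[x --> 0^'] --> l -> g x @[x --> 0^'+] --> l.
Proof.
move=> cvfx A /cvfx /nbhs_ballP [_ /posnumP[e] xe_A].
by exists e%:num => //= y xe_y; rewrite lt_def => /andP [xney _]; apply: xe_A.
Qed.

Lemma lim_le_right (g : R -> R) l a s : 0 < s ->
  g x @[x --> 0^'+] --> l -> (forall x, 0 < x <= s -> g x <= a) -> l <= a.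
Proof.
move=> s0 gl H.
have <- : lim (g x @[x --> 0^'+]) = l by apply: cvg_lim.
apply: limr_le; first by apply/cvg_ex; exists l.
near=> x; apply: H; apply/andP; split.
  by near: x; exact: nbhs_right_gt.
by near: x; exact: nbhs_right_le.
Unshelve. all: by end_near.
Qed.

Lemma lim_ge_right (g : R -> R) l a s : 0 < s ->
  g x @[x --> 0^'+] --> l -> (forall x, 0 < x <= s -> a <= g x) -> a <= l.
Proof.
move=> s0 gl H.
have <- : lim (g x @[x --> 0^'+]) = l by apply: cvg_lim.
apply: limr_ge; first by apply/cvg_ex; exists l.
near=> x; apply: H; apply/andP; split.
  by near: x; exact: nbhs_right_gt.
by near: x; exact: nbhs_right_le.
Unshelve. all: by end_near.
Qed.

Lemma le_of_small (a b c : R) : 0 <= c -> (forall s, 0 < s <= 1 -> b - s * c <= a) -> b <= a.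
Proof.
move=> c0 H.
have cv : (fun s => b - s * c) x @[x --> 0^'+] --> b.
  have h1 : (fun s : R => s * c) @ (nbhs (0:R)) --> 0 * c by apply: cvgMr_tmp; exact: cvg_id.
  have h2 := cvgB (cvg_cst b) h1.
  rewrite mul0r subr0 in h2.
  by apply: cvg_at_right_filter; exact: h2.
exact: (lim_le_right ltr01 cv H).
Qed.

End Ana.

Section Grad.
Variables (R : realType) (n : nat) (f : 'cV[R]_n -> R) (grad : 'cV[R]_n -> 'cV[R]_n).
Hypothesis C1 : C1_with_gradient f grad.

Lemma dd_cvg x v :
  (fun s : R => s^-1 * (f (x + s *: v) - f x)) @ 0^' --> dotv (grad x) v.
Proof.
have [dx gx] := C1.1 x.
have d : derivable f x v by apply: diff_derivable.
have e : (fun s : R => s^-1 *: ((f \o shift x) (s *: v) - f x))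
       = (fun s => s^-1 * (f (x + s *: v) - f x)).
  by apply: funext => s /=; rewrite [s *: v + x]addrC.
have -> : dotv (grad x) v = 'D_v f x by rewrite deriveE // gx.
rewrite /derive -e.
by move: d; rewrite /derivable.
Qed.


Lemma grad_ineq : convex_fun f -> forall x y, f x + dotv (grad x) (y - x) <= f y.
Proof.
move=> cf x y.
have cv := dright (@dd_cvg x (y - x)).
suff : dotv (grad x) (y - x) <= f y - f x by lra.
apply: (lim_le_right ltr01 cv) => s /andP[s0 s1].
have e : x + s *: (y - x) = s *: y + (1 - s) *: x.
  by apply/matrixP => i j; rewrite !mxE; ring.
rewrite e.
have h := cf y x s.
have hs : 0 <= s <= 1 by rewrite ltW.
move: (h hs) => {}h.
rewrite ler_pdivrMl //; lra.
Qed.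

Lemma fermat x g :
  (forall v, exists K, 0 <= K /\ forall s, 0 < s <= 1 ->
     f x - s * dotv g v - s ^+ 2 * K <= f (x + s *: v)) ->
  grad x + g = 0.
Proof.
move=> H.
have H1 : forall v, - dotv g v <= dotv (grad x) v.
  move=> v; have [K [K0 HK]] := H v.
  apply: (le_of_small (c := K)) => // r /andP[r0 r1].
  apply: (lim_ge_right r0 (dright (@dd_cvg x v))) => s /andP[s0 sr].
  have s1 : s <= 1 by apply: le_trans sr r1.
  have := HK s; rewrite s0 s1 => /(_ isT) hk.
  rewrite ler_pdivlMl //.
  have : s * K <= r * K by apply: ler_wpM2r.
  rewrite expr2 in hk; nra.
apply: sqn_eq0; apply/eqP; rewrite eq_le sqn_ge0 andbT.
have := H1 (- (grad x + g)).
rewrite !dotvNr /sqn dotvDl; lra.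
Qed.

Lemma dot_le_enorm (p : nat) (u v : 'cV[R]_p) : dotv u v <= enorm u * enorm v.
Proof.
have [h|h] := lerP (dotv u v) 0.
  by apply: le_trans h _; rewrite mulr_ge0 // sqrtr_ge0.
rewrite /enorm -sqrtrM ?sqn_ge0 //.
have -> : dotv u v = Num.sqrt (dotv u v ^+ 2) by rewrite sqrtr_sqr gtr0_norm.
by rewrite ler_sqrt ?CS // mulr_ge0 // sqn_ge0.
Qed.

Lemma enormZ (p : nat) (a : R) (u : 'cV[R]_p) : 0 <= a -> enorm (a *: u) = a * enorm u.
Proof.
by move=> a0; rewrite /enorm sqnZ sqrtrM ?sqr_ge0 // sqrtr_sqr ger0_norm.
Qed.

Variable L : R.
Hypothesis L0 : 0 < L.
Hypothesis Lip : forall y z, enorm (grad y - grad z) <= L * enorm (y - z).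

Lemma descent x y : f y <= f x + dotv (grad x) (y - x) + L / 2 * sqn (y - x).
Proof.
set h := y - x; set c := dotv (grad x) h; set S := sqn h.
pose phi := fun tau : R => f (x + tau *: h) - tau * c - L / 2 * S * tau ^+ 2.
have der : forall tau : R, is_derive tau (1:R) phi (dotv (grad (x + tau *: h)) h - c - L * S * tau).
  move=> tau; apply: is_derive_of_cvg.
  pose Q := fun s : R => s^-1 * (f ((x + tau *: h) + s *: h) - f (x + tau *: h))
             - c - L / 2 * S * (2 * tau + s).
  have hQ : Q s @[s --> 0^'] --> dotv (grad (x + tau *: h)) h - c - L * S * tau.
    have e : dotv (grad (x + tau *: h)) h - c - L * S * tau
           = dotv (grad (x + tau *: h)) h - c - L / 2 * S * (2 * tau + 0) by field.
    rewrite e; apply: cvgB; first by apply: cvgB; [exact: dd_cvg | exact: cvg_cst].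
    apply: cvgMl_tmp; apply: cvg_within_filter; apply: cvgD; [exact: cvg_cst| exact: cvg_id].
  apply: cvg_trans hQ; apply: near_eq_cvg; near=> s.
  have sn0 : s != 0 by near: s; exact: nbhs_dnbhs_neq.
  rewrite /Q /phi.
  have -> : x + (s + tau) *: h = (x + tau *: h) + s *: h.
    by apply/matrixP => i j; rewrite !mxE; ring.
  by field.
have dv : forall tau : R, derivable phi tau 1 by move=> tau; have [] := der tau.
have := @ler0_derive1_nincr R phi 0 1.
move=> /(_ (fun tau _ => dv tau)).
have hd : forall tau : R, tau \in `]0, 1[ -> derive1 phi tau <= 0.
  move=> tau; rewrite in_itv /= => /andP[t0 t1].
  rewrite derive1E (@derive_val _ _ _ _ _ _ _ (der tau)).
  have : dotv (grad (x + tau *: h) - grad x) h <= L * tau * S.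
    have h1 := dot_le_enorm (grad (x + tau *: h) - grad x) h.
    have e2 : x + tau *: h - x = tau *: h by rewrite addrC addKr.
    have h2 := Lip (x + tau *: h) x.
    rewrite e2 (enormZ _ (ltW t0)) in h2.
    have h3 : enorm (grad (x + tau *: h) - grad x) * enorm h <= L * (tau * enorm h) * enorm h.
      by apply: ler_wpM2r; [exact: sqrtr_ge0 | exact: h2].
    have h4 : L * (tau * enorm h) * enorm h = L * tau * S.
      rewrite /S /enorm -(sqr_sqrtr (sqn_ge0 h)) sqrtr_sqr ger0_norm ?sqrtr_ge0 //; ring.
    by rewrite -h4; apply: le_trans h1 h3.
  rewrite dotvBl /c; lra.
move=> /(_ hd).
have hc : {within `[0, 1], continuous phi}.
  apply: derivable_within_continuous => tau _; exact: dv.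
move=> /(_ hc 0 1 (lexx _) ler01 (lexx _)).
rewrite /phi scale0r addr0 scale1r mul0r subr0 expr0n /= mulr0 subr0 expr1n mulr1 mul1r.
have -> : x + h = y by rewrite /h addrC subrK.
lra.
Unshelve. all: by end_near.
Qed.

End Grad.

Section Clu.
Variable R : realType.

Lemma cluster_ge {U : topologicalType} (s : nat -> U) (p : U) (h : U -> R) (c : R) :
  cluster (s @ \oo) p -> h x @[x --> p] --> h p ->
  (forall e, 0 < e -> \forall k \near \oo, c - e <= h (s k)) -> c <= h p.
Proof.
move=> cl hc H.
rewrite leNgt; apply/negP => hpc.
set e := (c - h p) / 2.
have e0 : 0 < e by rewrite /e divr_gt0 // subr_gt0.
have nB : \forall q \near p, h q < c - e.
  apply: cvgr_lt hc _ _; rewrite /e; lra.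
have := cl [set q | c - e <= h q] [set q | h q < c - e] (H e e0) nB.
by case=> q [/= h1 h2]; lra.
Qed.

Definition ECont {T : topologicalType} p (u : T -> 'cV[R]_p) (t : T) :=
  forall i, (fun z => u z i 0) z @[z --> t] --> u t i 0.

Lemma ECont_of_cont {T : topologicalType} p (u : T -> 'cV[R]_p) t :
  u z @[z --> t] --> u t -> ECont u t.
Proof.
move=> hu i; apply: (cvg_comp u (fun M : 'cV[R]_p => M i 0) hu).
exact: coord_continuous.
Qed.

Lemma cvg_sumR {T : topologicalType} p (F : 'I_p -> T -> R) t :
  (forall i, F i z @[z --> t] --> F i t) ->
  \sum_(i < p) F i z @[z --> t] --> \sum_(i < p) F i t.
Proof.
elim: p F => [|p IH] F H.
  under eq_fun do rewrite big_ord0.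
  rewrite big_ord0; exact: cvg_cst.
under eq_fun do rewrite big_ord_recr.
rewrite big_ord_recr; apply: cvgD; last exact: H.
exact: (IH (fun i => F (widen_ord (leqnSn p) i))).
Qed.

Lemma ECont_dotv {T : topologicalType} p (u v : T -> 'cV[R]_p) t :
  ECont u t -> ECont v t -> dotv (u z) (v z) @[z --> t] --> dotv (u t) (v t).
Proof.
move=> hu hv; rewrite /dotv.
apply: (@cvg_sumR T p (fun i z => u z i 0 * v z i 0)) => i.
exact: cvgM.
Qed.

Lemma ECont_lin {T : topologicalType} q p (A : 'M[R]_(q, p)) (b : 'cV[R]_q)
  (u : T -> 'cV[R]_p) t :
  ECont u t -> ECont (fun z => A *m u z - b) t.
Proof.
move=> hu i.
have e : forall z, (A *m u z - b) i 0 = \sum_(j < p) A i j * u z j 0 - b i 0.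
  by move=> z; rewrite !mxE.
under eq_fun do rewrite e.
rewrite e; apply: cvgB; last exact: cvg_cst.
apply: (@cvg_sumR T p (fun j z => A i j * u z j 0)) => j.
by apply: cvgMl_tmp; apply: hu.
Qed.

Lemma ECont_cst {T : topologicalType} p (u : 'cV[R]_p) t : ECont (fun _ : T => u) t.
Proof. by move=> i; exact: cvg_cst. Qed.

Lemma ECont_fst n m (p : 'cV[R]_n * 'cV[R]_m) : ECont (fun q => q.1) p.
Proof.
case: p => a b; apply: ECont_of_cont.
exact: cvg_fst.
Qed.

Lemma ECont_snd n m (p : 'cV[R]_n * 'cV[R]_m) : ECont (fun q => q.2) p.
Proof.
case: p => a b; apply: ECont_of_cont.
exact: cvg_snd.
Qed.

End Clu.

Section Gen.
Variable R : realType.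

Lemma quad_expand q p (M : 'M[R]_(q, p)) (c : 'cV[R]_q) (z v : 'cV[R]_p) (s : R) :
  sqn (M *m (z + s *: v) - c) =
  sqn (M *m z - c) + 2 * s * dotv (M^T *m (M *m z - c)) v + s ^+ 2 * sqn (M *m v).
Proof.
have -> : M *m (z + s *: v) - c = (M *m z - c) + s *: (M *m v).
  by rewrite mulmxDr -scalemxAr addrAC.
by rewrite sqnD sqnZ dotvZr dotv_mulmx; ring.
Qed.

Lemma sqn_shift p (z v c : 'cV[R]_p) (s : R) :
  sqn ((z + s *: v) - c) = sqn (z - c) + 2 * s * dotv (z - c) v + s ^+ 2 * sqn v.
Proof.
have -> : (z + s *: v) - c = (z - c) + s *: v by rewrite addrAC.
by rewrite sqnD sqnZ dotvZr; ring.
Qed.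

Lemma lin_expand q p (M : 'M[R]_(q, p)) (c u : 'cV[R]_q) (z v : 'cV[R]_p) (s : R) :
  dotv u (M *m (z + s *: v) - c) = dotv u (M *m z - c) + s * dotv (M^T *m u) v.
Proof.
have -> : M *m (z + s *: v) - c = (M *m z - c) + s *: (M *m v).
  by rewrite mulmxDr -scalemxAr addrAC.
by rewrite dotvDr dotvZr dotv_mulmx.
Qed.

Lemma quad_lower q p (M : 'M[R]_(q, p)) (c : 'cV[R]_q) (z u : 'cV[R]_p) :
  sqn (M *m z - c) + 2 * dotv (M^T *m (M *m z - c)) (u - z) <= sqn (M *m u - c).
Proof.
have -> : M *m u - c = (M *m z - c) + M *m (u - z).
  by rewrite mulmxBr; apply/matrixP => i j; rewrite !mxE; ring.
rewrite -dotv_mulmx (sqnD (M *m z - c)); have := sqn_ge0 (M *m (u - z)); lra.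
Qed.

Lemma energy_ident p (W1 X0 X1 : 'cV[R]_p) (Tk eps : R) :
  dotv ((W1 - (X0 + Tk *: (X1 - X0))) + eps *: (X1 - X0)) W1 =
  (sqn W1 / 2 + eps / 2 * sqn X1) - (sqn (X0 + Tk *: (X1 - X0)) / 2 + eps/2 * sqn X0)
  + sqn ((W1 - (X0 + Tk *: (X1 - X0))) + eps *: (X1 - X0)) / 2
  + eps * (Tk - (1+eps)/2) * sqn (X1 - X0).
Proof.
rewrite /sqn !(dotvDl, dotvDr, dotvZl, dotvZr, dotvNl, dotvNr).
rewrite [dotv X0 W1]dotvC [dotv X1 W1]dotvC [dotv X1 X0]dotvC.
by field.
Qed.

Lemma sqn_add2 p (u v : 'cV[R]_p) : sqn (u + v) <= 2 * sqn u + 2 * sqn v.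
Proof. rewrite sqnD; have := dot_le u v; lra. Qed.

Lemma sqn_sub2 p (u v : 'cV[R]_p) : sqn (u - v) <= 2 * sqn u + 2 * sqn v.
Proof. by apply: le_trans (sqn_add2 _ _) _; rewrite sqnN. Qed.

Lemma sqn_convex' p (u v : 'cV[R]_p) (r : R) : 0 <= r <= 1 ->
  sqn (r *: u + (1 - r) *: v) <= r * sqn u + (1 - r) * sqn v.
Proof.
move=> /andP[r0 r1].
have h01 : 0 <= 1 - r <= 1 by apply/andP; split; lra.
have h := sqn_convex u v h01.
by rewrite (_ : 1 - (1 - r) = r) in h; last by ring.
Qed.

Lemma dot_small p (a y : 'cV[R]_p) (B e : R) : 0 <= B -> 0 < e ->
  sqn a <= B -> sqn y <= e ^+ 2 / (B + 1) -> `|dotv a y| <= e.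
Proof.
move=> B0 e0 ha hy.
have cs := CS a y.
have h1 : sqn a * sqn y <= B * (e ^+ 2 / (B + 1)).
  by apply: ler_pM => //; rewrite sqn_ge0.
have h2 : B * (e ^+ 2 / (B + 1)) <= e ^+ 2.
  rewrite mulrA ler_pdivrMr; last by lra.
  have := sqr_ge0 e; nra.
have h3 : `|dotv a y| ^+ 2 <= e ^+ 2.
  rewrite real_normK ?num_real //; lra.
have n0 := normr_ge0 (dotv a y).
rewrite -(@ler_pXn2r _ 2) // ?nnegrE ?ltW //.
Qed.

Definition ev (P : nat -> Prop) := exists N, forall k, (N <= k)%N -> P k.

Lemma ev_and (P Q : nat -> Prop) : ev P -> ev Q -> ev (fun k => P k /\ Q k).
Proof.
case=> N1 H1 [N2 H2]; exists (maxn N1 N2) => k hk.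
by rewrite geq_max in hk; case/andP: hk => h1 h2; split; [apply: H1 | apply: H2].
Qed.

Lemma ev_mono (P Q : nat -> Prop) : (forall k, P k -> Q k) -> ev P -> ev Q.
Proof. by move=> H [N HN]; exists N => k hk; apply: H; apply: HN. Qed.

Lemma ev_ge1 : ev (fun k => (1 <= k)%N).
Proof. by exists 1%N. Qed.

Lemma ev_shift (P : nat -> Prop) : ev P -> ev (fun k => P k.+1).
Proof. by case=> N HN; exists N => k hk; apply: HN; apply: leqW. Qed.

Lemma trmxZ' q p (a : R) (M : 'M[R]_(q, p)) : (a *: M)^T = a *: M^T.
Proof. by apply/matrixP => i j; rewrite !mxE. Qed.

Lemma dotv_add3 p (a1 a2 a3 v : 'cV[R]_p) :
  dotv (a1 + a2 + a3) v = dotv a1 v + dotv a2 v + dotv a3 v.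
Proof. by rewrite !dotvDl. Qed.

Lemma dotv_add4 p (a1 a2 a3 a4 v : 'cV[R]_p) :
  dotv (a1 + a2 + a3 + a4) v = dotv a1 v + dotv a2 v + dotv a3 v + dotv a4 v.
Proof. by rewrite !dotvDl. Qed.

Lemma opt_vec p (G : 'cV[R]_p) :
  (forall v, exists K, 0 <= K /\ forall s, 0 < s <= 1 -> 0 <= s * dotv G v + s ^+ 2 * K) ->
  G = 0.
Proof.
move=> H.
have H1 : forall v, 0 <= dotv G v.
  move=> v; have [K [K0 HK]] := H v.
  apply: (le_of_small (c := K)) => // s hs.
  have := HK s hs; case/andP: hs => s0 _.
  have -> : s * dotv G v + s ^+ 2 * K = s * (dotv G v + s * K) by ring.
  rewrite pmulr_rge0 //; lra.
apply: sqn_eq0; apply/eqP; rewrite eq_le sqn_ge0 andbT.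
have := H1 (- G); rewrite dotvNr /sqn; lra.
Qed.

End Gen.

Section Main.
Variables (R : realType) (n m : nat)
  (f : 'cV[R]_n -> R) (grad : 'cV[R]_n -> 'cV[R]_n)
  (A : 'M[R]_(m, n)) (b : 'cV[R]_m)
  (t : nat -> R) (rho eta gamma delta beta : R)
  (x : nat -> 'cV[R]_n) (lam : nat -> 'cV[R]_m) (xo : 'cV[R]_n) (lo : 'cV[R]_m).
Hypotheses (Hcf : convex_fun f) (HC1 : C1_with_gradient f grad)
  (HKKT : KKT_set grad A b xo lo) (Hrho : 0 < rho <= 1) (Ht : param_seq t rho)
  (Heta : rho <= eta <= 1) (Hg : 0 < gamma) (Hd : 0 < delta) (Hb : 0 <= beta)
  (Hx0 : x 0%N = x 1%N) (Hl0 : lam 0%N = lam 1%N)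
  (Hlam : forall k, (1 <= k)%N ->
     lam k.+1 = lbar t lam k
                + delta *: (cc t eta k *: (A *m x k.+1) - rk A b t eta x k)).

Definition FF u := f u + beta / 2 * sqn (A *m u - b).
Definition TT k := t k / eta.
Definition ww k := x k.-1 + TT k *: (x k - x k.-1).
Definition mu k := lam k.-1 + TT k *: (lam k - lam k.-1).
Definition dd k := x k.+1 - xbar t x k.
Definition eps := eta^-1 - 1.

Lemma eta_gt0 : 0 < eta.
Proof. case/andP: Hrho => r0 _; case/andP: Heta => h _; exact: lt_le_trans r0 h. Qed.

Lemma t_ge1 k : (1 <= k)%N -> 1 <= t k.
Proof.
case: Ht => [mono [t1 _]].
elim: k => // k IH hk.
case: k IH hk => [|k] IH hk; first by rewrite t1.
by apply: le_trans (IH isT) (mono k.+1 isT).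
Qed.

Lemma t_gt0 k : (1 <= k)%N -> 0 < t k.
Proof. by move=> hk; apply: lt_le_trans ltr01 (t_ge1 hk). Qed.

Lemma TT_ge1 k : (1 <= k)%N -> 1 <= TT k.
Proof.
move=> hk; rewrite /TT ler_pdivlMr ?eta_gt0 // mul1r.
by case/andP: Heta => _ e1; apply: le_trans e1 (t_ge1 hk).
Qed.

Lemma TT_gt0 k : (1 <= k)%N -> 0 < TT k.
Proof. by move=> hk; apply: lt_le_trans ltr01 (TT_ge1 hk). Qed.

Lemma TT_neq0 k : (1 <= k)%N -> TT k != 0.
Proof. by move=> hk; rewrite gt_eqF // TT_gt0. Qed.

Lemma tdiff k : (1 <= k)%N -> t k.+1 - t k <= rho.
Proof.
move=> hk; case: Ht => [mono [_ [_ [_ hq]]]].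
have h1 := hq k hk; have h2 := mono k hk.
have p1 := t_gt0 hk; have p2 : 0 < t k.+1 by apply: t_gt0.
nra.
Qed.

Lemma TT_step k : (1 <= k)%N -> TT k.+1 - 1 <= TT k.
Proof.
move=> hk; have := tdiff hk; case/andP: Heta => re _.
have e0 := eta_gt0.
have -> : TT k.+1 - 1 = (t k.+1 - eta) / eta by rewrite /TT; field; rewrite gt_eqF.
rewrite /TT ler_pM2r ?invr_gt0 //; lra.
Qed.

Lemma TT_sq k : (1 <= k)%N -> TT k.+1 ^+ 2 - TT k.+1 <= TT k ^+ 2.
Proof.
move=> hk; case: Ht => [_ [_ [_ [_ hq]]]]; have h := hq k hk.
have e0 := eta_gt0; case/andP: Heta => re _.
have p2 : 0 < t k.+1 by apply: t_gt0.
have : t k.+1 ^+ 2 - eta * t k.+1 <= t k ^+ 2 by nra.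
move=> h2.
have -> : TT k.+1 ^+ 2 - TT k.+1 = (t k.+1 ^+ 2 - eta * t k.+1) / eta ^+ 2.
  by rewrite /TT; field; rewrite gt_eqF.
have -> : TT k ^+ 2 = t k ^+ 2 / eta ^+ 2 by rewrite /TT expr_div_n.
by rewrite ler_pM2r // invr_gt0 exprn_gt0.
Qed.

Lemma TT_big M : exists N, forall k, (N <= k)%N -> M <= TT k.
Proof.
case: Ht => [_ [_ [_ [ti _]]]].
have := (cvgryPge _).1 ti (M * eta).
case => N _ HN; exists N => k hk.
have := HN k hk; rewrite /TT ler_pdivlMr ?eta_gt0 //.
Qed.


Lemma eta_neq0 : eta != 0. Proof. by rewrite gt_eqF // eta_gt0. Qed.

Lemma id_w k : cc t eta k *: (A *m x k.+1) - rk A b t eta x k = A *m ww k.+1 - b.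
Proof.
rewrite /cc /rk /alpha /ww /= mulmxDr -!scalemxAr mulmxDr mulmxN.
apply/matrixP => i j; rewrite !mxE /TT; field; exact: eta_neq0.
Qed.

Lemma mu_eq k : mu k.+1 = cc t eta k *: lam k.+1 - alpha t eta k *: lam k.
Proof.
rewrite /mu /cc /alpha /=.
apply/matrixP => i j; rewrite !mxE /TT; field; exact: eta_neq0.
Qed.

Lemma id_lam k : (1 <= k)%N -> lam k.+1 = lbar t lam k + delta *: (A *m ww k.+1 - b).
Proof. by move=> hk; rewrite Hlam // id_w. Qed.

Lemma id_p k : (1 <= k)%N ->
  pk t eta lam k + (delta * cc t eta k) *: (A *m ww k.+1 - b) = mu k.+1.
Proof.
move=> hk; rewrite mu_eq (id_lam hk) /pk.
by apply/matrixP => i j; rewrite !mxE; ring.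
Qed.

Lemma id_d k : (1 <= k)%N ->
  TT k.+1 *: dd k = (ww k.+1 - ww k) + eps *: (x k - x k.-1).
Proof.
case: k => // k _; have tn : t k.+2 != 0 by rewrite gt_eqF // t_gt0.
rewrite /dd /xbar /ww /eps /=.
apply/matrixP => i j; rewrite !mxE /TT; field.
by rewrite tn eta_neq0.
Qed.

Lemma id_dl k : (1 <= k)%N ->
  TT k.+1 *: (lam k.+1 - lbar t lam k) = (mu k.+1 - mu k) + eps *: (lam k - lam k.-1).
Proof.
case: k => // k _; have tn : t k.+2 != 0 by rewrite gt_eqF // t_gt0.
rewrite /lbar /mu /eps /=.
apply/matrixP => i j; rewrite !mxE /TT; field.
by rewrite tn eta_neq0.
Qed.

Lemma id_x k : TT k.+1 *: x k.+1 = (TT k.+1 - 1) *: x k + ww k.+1.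
Proof. by rewrite /ww /=; apply/matrixP => i j; rewrite !mxE; ring. Qed.

Lemma id_l k : TT k.+1 *: lam k.+1 = (TT k.+1 - 1) *: lam k + mu k.+1.
Proof. by rewrite /mu /=; apply/matrixP => i j; rewrite !mxE; ring. Qed.

Definition SI k := forall u,
  FF (x k.+1) - dotv (A^T *m mu k.+1 + gamma^-1 *: dd k) (u - x k.+1)
  - 1 / (2 * gamma) * sqn (dd k) <= FF u.

Definition gQ k z := beta *: (A^T *m (A *m z - b)) + gamma^-1 *: (z - xbar t x k)
  + A^T *m pk t eta lam k
  + (delta * cc t eta k) *: (A^T *m (cc t eta k *: (A *m z) - rk A b t eta x k)).

Lemma gQ_eq k : (1 <= k)%N ->
  gQ k (x k.+1) = beta *: (A^T *m (A *m x k.+1 - b)) + gamma^-1 *: dd k + A^T *m mu k.+1.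
Proof.
move=> hk; rewrite /gQ id_w -(id_p hk) (mulmxDr A^T (pk _ _ _ _)) -scalemxAr /dd.
by rewrite !addrA.
Qed.

Definition Qf k z := beta / 2 * sqn (A *m z - b) + 1 / (2 * gamma) * sqn (z - xbar t x k)
  + dotv (pk t eta lam k) (A *m z - b)
  + delta / 2 * sqn (cc t eta k *: (A *m z) - rk A b t eta x k).

Definition KQ k v := beta / 2 * sqn (A *m v) + 1 / (2 * gamma) * sqn v
              + delta / 2 * sqn ((cc t eta k *: A) *m v).

Lemma KQ_ge0 k v : 0 <= KQ k v.
Proof.
have h1 := sqn_ge0 (A *m v); have h2 := sqn_ge0 v.
have h3 := sqn_ge0 ((cc t eta k *: A) *m v).
have g1 : 0 <= 1 / (2 * gamma) by rewrite divr_ge0 // mulr_ge0 // ltW.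
have g2 : 0 <= beta / 2 by rewrite divr_ge0.
have g3 : 0 <= delta / 2 by rewrite divr_ge0 // ltW.
rewrite /KQ; apply: addr_ge0; first apply: addr_ge0; exact: mulr_ge0.
Qed.

Lemma obj1_eq k z : obj1 A b t eta x lam f beta gamma delta k z = f z + Qf k z.
Proof. by rewrite /obj1 /Qf !addrA. Qed.

Lemma obj2_eq k z : obj2 A b t eta x lam grad beta gamma delta k z
  = dotv (grad (xbar t x k)) z + Qf k z.
Proof. by rewrite /obj2 /Qf !addrA. Qed.


Lemma grad_eq k (g0 : 'cV[R]_n) : (1 <= k)%N -> g0 + gQ k (x k.+1) = 0 ->
  g0 = - (beta *: (A^T *m (A *m x k.+1 - b)) + gamma^-1 *: dd k + A^T *m mu k.+1).
Proof. by move=> hk /eqP; rewrite addr_eq0 gQ_eq // => /eqP. Qed.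

Lemma SI_from k (gk : 'cV[R]_n) (e : R) : (1 <= k)%N ->
  gk = - (beta *: (A^T *m (A *m x k.+1 - b)) + gamma^-1 *: dd k + A^T *m mu k.+1) ->
  e <= 1 / (2 * gamma) * sqn (dd k) ->
  (forall u, f (x k.+1) + dotv gk (u - x k.+1) - e <= f u) -> SI k.
Proof.
move=> hk hgk he H u.
have gi := H u.
have ql := ler_wpM2l (_ : 0 <= beta / 2) (quad_lower A b (x k.+1) u).
rewrite hgk dotvNl (dotv_add3 (beta *: _)) !dotvZl in gi.
rewrite /FF (dotvDl (A^T *m mu k.+1)) dotvZl.
have := ql (divr_ge0 Hb (ler0n _ 2)) => {}ql.
lra.
Qed.

Lemma Q_expand k z v s :
  beta / 2 * sqn (A *m (z + s *: v) - b) + 1 / (2 * gamma) * sqn ((z + s *: v) - xbar t x k)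
  + dotv (pk t eta lam k) (A *m (z + s *: v) - b)
  + delta / 2 * sqn (cc t eta k *: (A *m (z + s *: v)) - rk A b t eta x k)
  = beta / 2 * sqn (A *m z - b) + 1 / (2 * gamma) * sqn (z - xbar t x k)
  + dotv (pk t eta lam k) (A *m z - b)
  + delta / 2 * sqn (cc t eta k *: (A *m z) - rk A b t eta x k)
  + s * dotv (gQ k z) v
  + s ^+ 2 * (beta / 2 * sqn (A *m v) + 1 / (2 * gamma) * sqn v
              + delta / 2 * sqn ((cc t eta k *: A) *m v)).
Proof.
rewrite !scalemxAl quad_expand sqn_shift lin_expand quad_expand.
rewrite /gQ dotv_add4 !dotvZl trmxZ' -!scalemxAl !dotvZl.
field; rewrite gt_eqF //.
Qed.

Lemma Qf_expand k z v s : Qf k (z + s *: v) = Qf k z + s * dotv (gQ k z) v + s ^+ 2 * KQ k v.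
Proof. exact: Q_expand. Qed.

Lemma SI_case1 :
  (forall k, (1 <= k)%N -> forall z,
      obj1 A b t eta x lam f beta gamma delta k (x k.+1)
      <= obj1 A b t eta x lam f beta gamma delta k z) ->
  forall k, (1 <= k)%N -> SI k.
Proof.
move=> Hopt k hk.
have hg : grad (x k.+1) + gQ k (x k.+1) = 0.
  apply: (fermat HC1) => v; exists (KQ k v); split; first exact: KQ_ge0.
  move=> s hs; have := Hopt k hk (x k.+1 + s *: v).
  rewrite !obj1_eq Qf_expand; lra.
apply: (SI_from (gk := grad (x k.+1)) (e := 0) hk (grad_eq hk hg)).
  apply: mulr_ge0; [by rewrite divr_ge0 // mulr_ge0 // ltW | exact: sqn_ge0].
move=> u; have := grad_ineq HC1 Hcf (x k.+1) u; lra.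
Qed.

Lemma SI_case2 :
  (exists L : R, 0 < L /\
      (forall y z, enorm (grad y - grad z) <= L * enorm (y - z)) /\
      gamma <= 1 / L /\
      (forall k, (1 <= k)%N -> forall z,
        obj2 A b t eta x lam grad beta gamma delta k (x k.+1)
        <= obj2 A b t eta x lam grad beta gamma delta k z)) ->
  forall k, (1 <= k)%N -> SI k.
Proof.
case=> L [L0 [Lip [gL Hopt]]] k hk.
set xb := xbar t x k.
have hg : grad xb + gQ k (x k.+1) = 0.
  apply: opt_vec => v; exists (KQ k v); split; first exact: KQ_ge0.
  move=> s hs; have := Hopt k hk (x k.+1 + s *: v).
  rewrite !obj2_eq Qf_expand (dotvDr (x k.+1) (s *: v) (grad xb)) dotvZr.
  rewrite (dotvDl (grad xb)); lra.
have hLg : L <= gamma^-1.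
  rewrite ler_pdivlMr // in gL.
  rewrite -(ler_pM2r Hg) mulVf ?gt_eqF //; lra.
apply: (SI_from (gk := grad xb) (e := L / 2 * sqn (dd k)) hk (grad_eq hk hg)).
  have -> : 1 / (2 * gamma) = gamma^-1 / 2 by field; rewrite gt_eqF.
  apply: ler_wpM2r; first exact: sqn_ge0.
  by rewrite ler_pM2r // invr_gt0.
move=> u.
have gi := grad_ineq HC1 Hcf xb u.
have de := descent HC1 Lip xb (x k.+1).
have e1 : dotv (grad xb) (u - x k.+1) = dotv (grad xb) (u - xb) - dotv (grad xb) (x k.+1 - xb).
  rewrite -dotvBr; congr dotv; apply/matrixP => i j; rewrite !mxE; ring.
rewrite e1 /dd -/xb; lra.
Qed.

Definition Phi k := FF (x k) - FF xo + dotv lo (A *m x k - b).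
Definition Pp k := sqn (ww k - xo) / 2 + eps / 2 * sqn (x k.-1 - xo).
Definition Dp k := sqn (mu k - lo) / 2 + eps / 2 * sqn (lam k.-1 - lo).
Definition En k := TT k ^+ 2 * Phi k + Pp k / gamma + Dp k / delta.

Lemma Axo : A *m xo = b. Proof. by case: HKKT. Qed.
Lemma gxo : grad xo = - (A^T *m lo).
Proof. by case: HKKT => _ /eqP; rewrite addr_eq0 => /eqP. Qed.

Lemma FFxo : FF xo = f xo.
Proof. by rewrite /FF Axo subrr /sqn dotv0l mulr0 addr0. Qed.

Lemma Phi_ge0 k : 0 <= Phi k.
Proof.
have gi := grad_ineq HC1 Hcf xo (x k).
rewrite gxo dotvNl -dotv_mulmx mulmxBr Axo in gi.
have q : 0 <= beta / 2 * sqn (A *m x k - b) by rewrite mulr_ge0 ?sqn_ge0 // divr_ge0.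
rewrite /Phi FFxo /FF; lra.
Qed.

Lemma eps_ge0 : 0 <= eps.
Proof.
rewrite /eps subr_ge0 invr_ge1 ?eta_gt0 //; first by case/andP: Heta.
by rewrite unitfE eta_neq0.
Qed.

Lemma coef_ge0 k : (1 <= k)%N -> 0 <= eps * (TT k - (1 + eps) / 2).
Proof.
move=> hk; apply: mulr_ge0; first exact: eps_ge0.
have h1 := t_ge1 hk; have e0 := eta_gt0.
have -> : TT k - (1 + eps) / 2 = (t k - 1 / 2) / eta by rewrite /TT /eps; field; rewrite gt_eqF.
by rewrite divr_ge0 ?ltW //; lra.
Qed.


Lemma mat_ent p (M N : 'cV[R]_p) i j : M = N -> M i j = N i j.
Proof. by move=> ->. Qed.

Lemma x_comb k : x k.+1 = (1 - (TT k.+1)^-1) *: x k + (TT k.+1)^-1 *: ww k.+1.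
Proof.
have hT : TT k.+1 != 0 by apply: TT_neq0.
apply/matrixP => i j; have := mat_ent i j (id_x k); rewrite !mxE => h.
apply: (mulfI hT); rewrite h; field; exact: hT.
Qed.

Lemma l_comb k : lam k.+1 = (1 - (TT k.+1)^-1) *: lam k + (TT k.+1)^-1 *: mu k.+1.
Proof.
have hT : TT k.+1 != 0 by apply: TT_neq0.
apply/matrixP => i j; have := mat_ent i j (id_l k); rewrite !mxE => h.
apply: (mulfI hT); rewrite h; field; exact: hT.
Qed.

Lemma En_step (SIall : forall k, (1 <= k)%N -> SI k) k : (1 <= k)%N -> En k.+1 <= En k.
Proof.
move=> hk.
have hk1 : (1 <= k.+1)%N by [].
set T1 := TT k.+1; set T0 := TT k; set sI := T1^-1.
have T1ge := TT_ge1 hk1; have T0ge := TT_ge1 hk.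
have T1n : T1 != 0 by rewrite gt_eqF // (lt_le_trans ltr01).
have sI0 : 0 < sI by rewrite invr_gt0 (lt_le_trans ltr01).
have sI1 : sI <= 1 by rewrite invr_le1 // ?unitfE // (lt_le_trans ltr01).
have sIT : sI * T1 = 1 by rewrite mulVf.
set u := (1 - sI) *: x k + sI *: xo.
set w1 := ww k.+1; set m1 := mu k.+1; set d := dd k.
have hu : u - x k.+1 = sI *: (xo - w1).
  rewrite /u (x_comb k) -/T1 -/sI -/w1.
  by apply/matrixP => i j; rewrite !mxE; ring.
have cvx : FF u <= (1 - sI) * FF (x k) + sI * FF xo.
  have hs : 0 <= 1 - sI <= 1 by apply/andP; split; lra.
  have hf := Hcf (x k) xo hs.
  rewrite (_ : 1 - (1 - sI) = sI) in hf; last by ring.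
  have hA : A *m u - b = (1 - sI) *: (A *m x k - b) + sI *: (A *m xo - b).
    rewrite /u mulmxDr -!scalemxAr.
    by apply/matrixP => i j; rewrite !mxE; ring.
  have hs2 : 0 <= sI <= 1 by rewrite ltW.
  have hq := sqn_convex (A *m x k - b) (A *m xo - b) hs2.
  rewrite -hA in hq.
  have hq' := ler_wpM2l (divr_ge0 Hb (ler0n _ 2)) hq.
  rewrite /FF; lra.
have SIk := SIall k hk u.
rewrite hu dotvZr in SIk.
have hmu : dotv (A^T *m m1 + gamma^-1 *: d) (xo - w1)
    = - dotv m1 (A *m w1 - b) - gamma^-1 * dotv d (w1 - xo).
  rewrite dotvDl dotvZl -dotv_mulmx.
  have -> : A *m (xo - w1) = - (A *m w1 - b) by rewrite mulmxBr Axo opprB.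
  have -> : xo - w1 = - (w1 - xo) by rewrite opprB.
  by rewrite !dotvNr; ring.
rewrite hmu in SIk.
have hL : dotv lo (A *m x k.+1 - b)
    = (1 - sI) * dotv lo (A *m x k - b) + sI * dotv lo (A *m w1 - b).
  have -> : A *m x k.+1 - b = (1 - sI) *: (A *m x k - b) + sI *: (A *m w1 - b).
    rewrite (x_comb k) -/T1 -/sI -/w1 mulmxDr -!scalemxAr.
    by apply/matrixP => i j; rewrite !mxE; ring.
  by rewrite dotvDr !dotvZr.
set Dx := (w1 - ww k) + eps *: (x k - x k.-1).
have hd : d = sI *: Dx by rewrite /Dx -(id_d hk) -/T1 -/d scalerA mulVf // scale1r.
set Dl := (m1 - mu k) + eps *: (lam k - lam k.-1).
have hl : A *m w1 - b = (sI / delta) *: Dl.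
  have e1 : lam k.+1 - lbar t lam k = delta *: (A *m w1 - b).
    by rewrite (id_lam hk) -/w1 addrC addKr.
  rewrite /Dl -(id_dl hk) -/T1 e1 !scalerA.
  rewrite (_ : sI / delta * (T1 * delta) = 1) ?scale1r //.
  by rewrite /sI; field; rewrite T1n gt_eqF.
have hMw : dotv m1 (A *m w1 - b) = dotv lo (A *m w1 - b) + sI / delta * dotv Dl (m1 - lo).
  have : dotv m1 (A *m w1 - b) - dotv lo (A *m w1 - b) = sI / delta * dotv Dl (m1 - lo).
    by rewrite -dotvBl hl dotvZr dotvC.
  lra.
rewrite hMw -/d hd dotvZl sqnZ in SIk.
have EIp := energy_ident (w1 - xo) (x k.-1 - xo) (x k - xo) T0 eps.
have e1 : x k.-1 - xo + T0 *: (x k - xo - (x k.-1 - xo)) = ww k - xo.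
  by rewrite /ww /T0; apply/matrixP => i j; rewrite !mxE; ring.
have e3 : w1 - xo - (ww k - xo) + eps *: (x k - xo - (x k.-1 - xo)) = Dx.
  by rewrite /Dx; apply/matrixP => i j; rewrite !mxE; ring.
have e2 : x k - xo - (x k.-1 - xo) = x k - x k.-1.
  by apply/matrixP => i j; rewrite !mxE; ring.
rewrite e1 e3 e2 in EIp.
have EId := energy_ident (m1 - lo) (lam k.-1 - lo) (lam k - lo) T0 eps.
have f1 : lam k.-1 - lo + T0 *: (lam k - lo - (lam k.-1 - lo)) = mu k - lo.
  by rewrite /mu /T0; apply/matrixP => i j; rewrite !mxE; ring.
have f3 : m1 - lo - (mu k - lo) + eps *: (lam k - lo - (lam k.-1 - lo)) = Dl.
  by rewrite /Dl; apply/matrixP => i j; rewrite !mxE; ring.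
have f2 : lam k - lo - (lam k.-1 - lo) = lam k - lam k.-1.
  by apply/matrixP => i j; rewrite !mxE; ring.
rewrite f1 f3 f2 in EId.
have ineq1 : Phi k.+1 <= (1 - sI) * Phi k - sI * (sI / delta * dotv Dl (m1 - lo))
    - sI * gamma^-1 * (sI * dotv Dx (w1 - xo)) + 1 / (2 * gamma) * (sI ^+ 2 * sqn Dx).
  rewrite /Phi hL; lra.
have ineq2 : T1 ^+ 2 * Phi k.+1 <= (T1 ^+ 2 - T1) * Phi k - dotv Dl (m1 - lo) / delta
    - gamma^-1 * dotv Dx (w1 - xo) + sqn Dx / (2 * gamma).
  have h2 := ler_wpM2l (sqr_ge0 T1) ineq1.
  apply: (le_trans h2); rewrite le_eqVlt; apply/orP; left; apply/eqP.
  rewrite /sI; field.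
  by rewrite T1n !gt_eqF.
have ineq3 : (T1 ^+ 2 - T1) * Phi k <= T0 ^+ 2 * Phi k.
  by apply: ler_wpM2r; [exact: Phi_ge0 | exact: TT_sq].
have c0 := coef_ge0 hk.
have n1 : 0 <= gamma^-1 * (eps * (T0 - (1 + eps) / 2) * sqn (x k - x k.-1)).
  by apply: mulr_ge0; [rewrite invr_ge0 ltW | apply: mulr_ge0; [exact: c0 | exact: sqn_ge0]].
have n2 : 0 <= delta^-1 * (sqn Dl / 2 + eps * (T0 - (1 + eps) / 2) * sqn (lam k - lam k.-1)).
  apply: mulr_ge0; first by rewrite invr_ge0 ltW.
  apply: addr_ge0; last by apply: mulr_ge0; [exact: c0 | exact: sqn_ge0].
  by rewrite divr_ge0 ?sqn_ge0.
rewrite EIp EId in ineq2.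
rewrite /En /Pp /Dp /= -/T1 -/T0 -/w1 -/m1.
lra.
Qed.

Hypothesis SIall : forall k, (1 <= k)%N -> SI k.

Definition E0 := En 1%N.

Lemma Pp_ge0 k : 0 <= Pp k.
Proof.
rewrite /Pp; apply: addr_ge0; first by rewrite divr_ge0 ?sqn_ge0.
by rewrite mulr_ge0 ?sqn_ge0 // divr_ge0 // eps_ge0.
Qed.

Lemma Dp_ge0 k : 0 <= Dp k.
Proof.
rewrite /Dp; apply: addr_ge0; first by rewrite divr_ge0 ?sqn_ge0.
by rewrite mulr_ge0 ?sqn_ge0 // divr_ge0 // eps_ge0.
Qed.

Lemma En_parts k : 0 <= TT k ^+ 2 * Phi k /\ 0 <= Pp k / gamma /\ 0 <= Dp k / delta.
Proof.
split; first by rewrite mulr_ge0 ?sqr_ge0 ?Phi_ge0.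
split; first by rewrite divr_ge0 ?Pp_ge0 // ltW.
by rewrite divr_ge0 ?Dp_ge0 // ltW.
Qed.

Lemma En_le k : (1 <= k)%N -> En k <= E0.
Proof.
elim: k => // k IH hk.
case: k IH hk => [|k] IH hk; first by rewrite /E0.
exact: le_trans (En_step SIall (k := k.+1) isT) (IH isT).
Qed.

Lemma E0_ge0 : 0 <= E0.
Proof. have [h1 [h2 h3]] := En_parts 1; rewrite /E0 /En; lra. Qed.

Lemma w_bd k : (1 <= k)%N -> sqn (ww k - xo) <= 2 * gamma * E0.
Proof.
move=> hk; have h := En_le hk; have [h1 [h2 h3]] := En_parts k.
have hP : Pp k / gamma <= E0 by rewrite /En in h; lra.
have e2 : 0 <= eps / 2 * sqn (x k.-1 - xo) by rewrite mulr_ge0 ?sqn_ge0 // divr_ge0 // eps_ge0.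
rewrite ler_pdivrMr // in hP.
rewrite /Pp in hP; lra.
Qed.

Lemma mu_bd k : (1 <= k)%N -> sqn (mu k - lo) <= 2 * delta * E0.
Proof.
move=> hk; have h := En_le hk; have [h1 [h2 h3]] := En_parts k.
have hP : Dp k / delta <= E0 by rewrite /En in h; lra.
have e2 : 0 <= eps / 2 * sqn (lam k.-1 - lo) by rewrite mulr_ge0 ?sqn_ge0 // divr_ge0 // eps_ge0.
rewrite ler_pdivrMr // in hP.
rewrite /Dp in hP; lra.
Qed.

Lemma Phi_bd k : (1 <= k)%N -> TT k ^+ 2 * Phi k <= E0.
Proof.
move=> hk; have h := En_le hk; have [h1 [h2 h3]] := En_parts k.
rewrite /En in h; lra.
Qed.

Definition Bx := sqn (x 1%N - xo) + 2 * gamma * E0.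
Definition Bl := sqn (lam 1%N - lo) + 2 * delta * E0.

Lemma x_bd k : (1 <= k)%N -> sqn (x k - xo) <= Bx.
Proof.
have g0 : 0 <= 2 * gamma * E0 by rewrite mulr_ge0 ?E0_ge0 // mulr_ge0 // ltW.
elim: k => // k IH hk.
case: k IH hk => [|k] IH hk; first by rewrite /Bx; lra.
have hk1 : (1 <= k.+1)%N by [].
set sI := (TT k.+2)^-1.
have sI0 : 0 < sI by rewrite invr_gt0 TT_gt0.
have sI1 : sI <= 1 by rewrite invr_le1 ?unitfE ?TT_neq0 ?TT_ge1 // TT_gt0.
have e : x k.+2 - xo = (1 - sI) *: (x k.+1 - xo) + sI *: (ww k.+2 - xo).
  rewrite (x_comb k.+1) -/sI; apply/matrixP => i j; rewrite !mxE; ring.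
rewrite e; apply: le_trans (sqn_convex _ _ _) _; first by rewrite ltW.
have h1 := IH isT; have h2 := w_bd (isT : (1 <= k.+2)%N).
have : (1 - sI) * sqn (x k.+1 - xo) <= (1 - sI) * Bx by apply: ler_wpM2l => //; lra.
have : sI * sqn (ww k.+2 - xo) <= sI * Bx.
  apply: ler_wpM2l; [exact: ltW | rewrite /Bx; have := sqn_ge0 (x 1%N - xo); lra].
lra.
Qed.

Lemma l_bd k : (1 <= k)%N -> sqn (lam k - lo) <= Bl.
Proof.
have g0 : 0 <= 2 * delta * E0 by rewrite mulr_ge0 ?E0_ge0 // mulr_ge0 // ltW.
elim: k => // k IH hk.
case: k IH hk => [|k] IH hk; first by rewrite /Bl; lra.
set sI := (TT k.+2)^-1.
have sI0 : 0 < sI by rewrite invr_gt0 TT_gt0.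
have sI1 : sI <= 1 by rewrite invr_le1 ?unitfE ?TT_neq0 ?TT_ge1 // TT_gt0.
have e : lam k.+2 - lo = (1 - sI) *: (lam k.+1 - lo) + sI *: (mu k.+2 - lo).
  rewrite (l_comb k.+1) -/sI; apply/matrixP => i j; rewrite !mxE; ring.
rewrite e; apply: le_trans (sqn_convex _ _ _) _; first by rewrite ltW.
have h1 := IH isT; have h2 := mu_bd (isT : (1 <= k.+2)%N).
have : (1 - sI) * sqn (lam k.+1 - lo) <= (1 - sI) * Bl by apply: ler_wpM2l => //; lra.
have : sI * sqn (mu k.+2 - lo) <= sI * Bl.
  apply: ler_wpM2l; [exact: ltW | rewrite /Bl; have := sqn_ge0 (lam 1%N - lo); lra].
lra.
Qed.

Lemma xm1_bd k : (1 <= k)%N -> sqn (x k.-1 - xo) <= Bx.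
Proof.
case: k => // [[|k]] _; first by rewrite /= Hx0; apply: x_bd.
exact: x_bd.
Qed.

Lemma lm1_bd k : (1 <= k)%N -> sqn (lam k.-1 - lo) <= Bl.
Proof.
case: k => // [[|k]] _; first by rewrite /= Hl0; apply: l_bd.
exact: l_bd.
Qed.

Definition CD := 16 * gamma * E0 + 8 * eps ^+ 2 * Bx.

Lemma Dx_bd k : (1 <= k)%N -> sqn ((ww k.+1 - ww k) + eps *: (x k - x k.-1)) <= CD.
Proof.
move=> hk.
have h1 := w_bd (isT : (1 <= k.+1)%N); have h2 := w_bd hk.
have h3 := x_bd hk; have h4 := xm1_bd hk.
have a1 : sqn (ww k.+1 - ww k) <= 8 * gamma * E0.
  have -> : ww k.+1 - ww k = (ww k.+1 - xo) - (ww k - xo).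
    by apply/matrixP => i j; rewrite !mxE; ring.
  apply: le_trans (sqn_sub2 _ _) _; lra.
have a2 : sqn (x k - x k.-1) <= 4 * Bx.
  have -> : x k - x k.-1 = (x k - xo) - (x k.-1 - xo).
    by apply/matrixP => i j; rewrite !mxE; ring.
  apply: le_trans (sqn_sub2 _ _) _; lra.
apply: le_trans (sqn_add2 _ _) _.
rewrite sqnZ.
have : eps ^+ 2 * sqn (x k - x k.-1) <= eps ^+ 2 * (4 * Bx).
  by apply: ler_wpM2l; [exact: sqr_ge0 | exact: a2].
rewrite /CD; lra.
Qed.

Lemma d_sq k : (1 <= k)%N -> TT k.+1 ^+ 2 * sqn (dd k) <= CD.
Proof. by move=> hk; rewrite -sqnZ id_d //; apply: Dx_bd. Qed.

Definition vv k := mu k + eps *: lam k.-1.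
Definition Bv := delta^-1 ^+ 2 * (2 * (4 * delta * E0 + 2 * sqn lo)
                  + 2 * eps ^+ 2 * (2 * Bl + 2 * sqn lo)).

Lemma vv_bd k : (1 <= k)%N -> sqn (delta^-1 *: vv k) <= Bv.
Proof.
move=> hk; rewrite sqnZ /Bv; apply: ler_wpM2l; first exact: sqr_ge0.
have h1 : sqn (mu k) <= 4 * delta * E0 + 2 * sqn lo.
  have -> : mu k = (mu k - lo) + lo by rewrite subrK.
  apply: le_trans (sqn_add2 _ _) _; have := mu_bd hk; lra.
have h2 : sqn (lam k.-1) <= 2 * Bl + 2 * sqn lo.
  have -> : lam k.-1 = (lam k.-1 - lo) + lo by rewrite subrK.
  apply: le_trans (sqn_add2 _ _) _; have := lm1_bd hk; lra.
apply: le_trans (sqn_add2 _ _) _; rewrite sqnZ.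
have : eps ^+ 2 * sqn (lam k.-1) <= eps ^+ 2 * (2 * Bl + 2 * sqn lo).
  by apply: ler_wpM2l; [exact: sqr_ge0 | exact: h2].
lra.
Qed.

Definition UU k := TT k ^+ 2 *: (A *m x k - b) - delta^-1 *: vv k.

Lemma UU_rec k : (1 <= k)%N ->
  UU k.+1 = ((TT k.+1 ^+ 2 - TT k.+1) / TT k ^+ 2) *: UU k
          + (1 - (TT k.+1 ^+ 2 - TT k.+1) / TT k ^+ 2) *: (- (delta^-1 *: vv k)).
Proof.
move=> hk.
have T0n := TT_neq0 hk; have T1n := TT_neq0 (isT : (1 <= k.+1)%N).
have hx := id_x k.
have hl : TT k.+1 *: (A *m ww k.+1 - b) = delta^-1 *: (vv k.+1 - vv k).
  have e1 : lam k.+1 - lbar t lam k = delta *: (A *m ww k.+1 - b).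
    by rewrite (id_lam hk) addrC addKr.
  have := id_dl hk; rewrite e1 => e2.
  have -> : vv k.+1 - vv k = mu k.+1 - mu k + eps *: (lam k - lam k.-1).
    by rewrite /vv /=; apply/matrixP => i j; rewrite !mxE; ring.
  rewrite -e2; apply/matrixP => i j; rewrite !mxE; field; by rewrite gt_eqF.
have hy : TT k.+1 *: (A *m x k.+1 - b) = (TT k.+1 - 1) *: (A *m x k - b) + (A *m ww k.+1 - b).
  move: (congr1 (mulmx A) hx); rewrite mulmxDr -!scalemxAr => h.
  apply/matrixP => i j; have := mat_ent i j h; rewrite !mxE => h'.
  lra.
have step1 : UU k.+1 = (TT k.+1 ^+ 2 - TT k.+1) *: (A *m x k - b) - delta^-1 *: vv k.
  apply/matrixP => i j.
  have h1 := mat_ent i j hl; have h2 := mat_ent i j hy.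
  rewrite /UU /vv in h1 h2 *.
  move: (A *m x k.+1) (A *m x k) (A *m ww k.+1) h1 h2 => ax1 ax aw1 h1 h2.
  rewrite !mxE in h1 h2 *.
  have h3 := congr1 (fun z => TT k.+1 * z) h2.
  simpl in h3.
  lra.
rewrite step1 /UU.
apply/matrixP => i j; rewrite !mxE; field.
by rewrite T0n gt_eqF.
Qed.

Definition BU := sqn (UU 1%N) + Bv.

Lemma Bv_ge0 : 0 <= Bv.
Proof. by apply: le_trans (sqn_ge0 _) (vv_bd (isT : (1 <= 1)%N)). Qed.

Lemma UU_bd k : (1 <= k)%N -> sqn (UU k) <= BU.
Proof.
have bv0 := Bv_ge0.
elim: k => // k IH hk.
case: k IH hk => [|k] IH hk; first by rewrite /BU; lra.
have hk1 : (1 <= k.+1)%N by [].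
rewrite (UU_rec hk1).
set r := (TT k.+2 ^+ 2 - TT k.+2) / TT k.+1 ^+ 2.
have r01 : 0 <= r <= 1.
  have T1 := TT_ge1 (isT : (1 <= k.+2)%N); have T0 := TT_gt0 hk1.
  apply/andP; split.
    by rewrite /r divr_ge0 ?sqr_ge0 //; nra.
  by rewrite /r ler_pdivrMr ?exprn_gt0 // mul1r; apply: TT_sq.
apply: le_trans (sqn_convex' _ _ r01) _.
have h1 := IH isT.
have h2 : sqn (- (delta^-1 *: vv k.+1)) <= BU by rewrite sqnN; have := vv_bd hk1; rewrite /BU; have := sqn_ge0 (UU 1%N); lra.
case/andP: r01 => r0 r1.
have : r * sqn (UU k.+1) <= r * BU by apply: ler_wpM2l.
have : (1 - r) * sqn (- (delta^-1 *: vv k.+1)) <= (1 - r) * BU by apply: ler_wpM2l => //; lra.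
lra.
Qed.

Definition CY := 2 * BU + 2 * Bv.

Lemma y_sq k : (1 <= k)%N -> TT k ^+ 2 * sqn (A *m x k - b) <= CY.
Proof.
move=> hk.
have e : TT k ^+ 2 *: (A *m x k - b) = UU k + delta^-1 *: vv k by rewrite /UU subrK.
have h := sqn_add2 (UU k) (delta^-1 *: vv k).
rewrite -e sqnZ in h.
have T1 := TT_ge1 hk.
have : TT k ^+ 2 * sqn (A *m x k - b) <= (TT k ^+ 2) ^+ 2 * sqn (A *m x k - b).
  apply: ler_wpM2r; first exact: sqn_ge0.
  have t2 : 1 <= TT k ^+ 2 by rewrite exprn_ege1.
  by rewrite (expr2 (TT k ^+ 2)) ler_peMl // (le_trans ler01).
have := UU_bd hk; have := vv_bd hk; rewrite /CY; lra.
Qed.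

Lemma ev_small (C e : R) : 0 < e -> ev (fun k => (1 <= k)%N /\ C < e * TT k ^+ 2).
Proof.
move=> e0; have [N0 H] := TT_big (C / e + 1).
exists (maxn N0 1) => k hk; rewrite geq_max in hk; case/andP: hk => h1 h2.
split => //.
have hT := H k h1; set T := TT k in hT *.
have T1 : 1 <= T by apply: TT_ge1.
have q1 : T <= T ^+ 2 by rewrite expr2 ler_peMl // (le_trans ler01).
have q2 : e * T <= e * T ^+ 2 by apply: ler_wpM2l => //; exact: ltW.
have q3 : e * (C / e + 1) <= e * T by apply: ler_wpM2l => //; exact: ltW.
have q4 : e * (C / e + 1) = C + e by field; rewrite gt_eqF.
lra.
Qed.

Lemma small_of (a C e T2 : R) : 0 < e -> C < e * T2 -> 0 < T2 -> T2 * a <= C -> a <= e.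
Proof.
move=> e0 h1 h2 h3.
have : T2 * a < T2 * e by lra.
by rewrite ltr_pM2l // => /ltW.
Qed.

Lemma V_y e : 0 < e -> ev (fun k => sqn (A *m x k - b) <= e).
Proof.
move=> e0; apply: ev_mono (ev_small CY e0) => k [hk hc].
apply: (small_of e0 hc); first by rewrite exprn_gt0 // TT_gt0.
exact: y_sq.
Qed.

Lemma V_Phi e : 0 < e -> ev (fun k => Phi k <= e).
Proof.
move=> e0; apply: ev_mono (ev_small E0 e0) => k [hk hc].
apply: (small_of e0 hc); first by rewrite exprn_gt0 // TT_gt0.
exact: Phi_bd.
Qed.

Lemma V_d e : 0 < e -> ev (fun k => sqn (dd k) <= e).
Proof.
move=> e0; apply: ev_mono (ev_and ev_ge1 (ev_shift (ev_small CD e0))) => k [hk [_ hc]].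
apply: (small_of e0 hc); first by rewrite exprn_gt0 // TT_gt0.
exact: d_sq.
Qed.

Lemma normN_le (a : R) : - a <= `|a|.
Proof. by rewrite -normrN ler_norm. Qed.

Lemma V_FF e : 0 < e -> ev (fun k => FF (x k) <= FF xo + e).
Proof.
move=> e0.
have e2 : 0 < e / 2 by rewrite divr_gt0.
have B0 : 0 <= sqn lo := sqn_ge0 lo.
have e3 : 0 < (e / 2) ^+ 2 / (sqn lo + 1) by rewrite divr_gt0 ?exprn_gt0 //; lra.
apply: ev_mono (ev_and (V_Phi e2) (V_y e3)) => k [h1 h2].
have := dot_small B0 e2 (lexx _) h2.
have := normN_le (dotv lo (A *m x k - b)).
rewrite /Phi in h1; lra.
Qed.

Lemma V_psi z e : 0 < e ->
  ev (fun k => FF xo - e <= FF z + dotv (mu k.+1) (A *m z - b)).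
Proof.
move=> e0.
have e3 : 0 < e / 3 by rewrite divr_gt0.
set B1 := 2 * delta * E0.
have B10 : 0 <= B1 by rewrite mulr_ge0 ?E0_ge0 // mulr_ge0 // ltW.
set B2 := 2 * sqn (z - xo) + 2 * Bx.
have B20 : 0 <= B2.
  rewrite /B2 /Bx; have := sqn_ge0 (z - xo); have := sqn_ge0 (x 1%N - xo).
  have : 0 <= 2 * gamma * E0 by rewrite mulr_ge0 ?E0_ge0 // mulr_ge0 // ltW.
  lra.
have g3 : 0 < gamma * (e / 3) by rewrite mulr_gt0.
have f1 : 0 < (e / 3) ^+ 2 / (B1 + 1) by rewrite divr_gt0 ?exprn_gt0 //; lra.
have f2 : 0 < (gamma * (e / 3)) ^+ 2 / (B2 + 1) by rewrite divr_gt0 ?exprn_gt0 //; lra.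
have f3 : 0 < 2 * gamma * (e / 3) by rewrite mulr_gt0 // mulr_gt0.
apply: ev_mono (ev_and ev_ge1 (ev_and (ev_shift (V_y f1)) (ev_and (V_d f2) (V_d f3))))
  => k [hk [hy [hd1 hd2]]].
have c1 := dot_small B10 e3 (mu_bd (isT : (1 <= k.+1)%N)) hy.
have hB2 : sqn (z - x k.+1) <= B2.
  have -> : z - x k.+1 = (z - xo) - (x k.+1 - xo) by apply/matrixP => i j; rewrite !mxE; ring.
  apply: le_trans (sqn_sub2 _ _) _; have := x_bd (isT : (1 <= k.+1)%N); rewrite /B2; lra.
have c2 := dot_small B20 g3 hB2 hd1.
rewrite dotvC in c2.
have S := SIall hk z.
rewrite dotvDl dotvZl -dotv_mulmx in S.
have eA : A *m (z - x k.+1) = (A *m z - b) - (A *m x k.+1 - b).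
  by rewrite mulmxBr; apply/matrixP => i j; rewrite !mxE; ring.
rewrite eA dotvBr in S.
have P := Phi_ge0 k.+1; rewrite /Phi in P.
have hmu : dotv (mu k.+1 - lo) (A *m x k.+1 - b)
         = dotv (mu k.+1) (A *m x k.+1 - b) - dotv lo (A *m x k.+1 - b) by rewrite dotvBl.
have n1 := normN_le (dotv (mu k.+1 - lo) (A *m x k.+1 - b)).
have n2 := ler_norm (dotv (dd k) (z - x k.+1)).
have q1 : gamma^-1 * dotv (dd k) (z - x k.+1) <= e / 3.
  have -> : e / 3 = gamma^-1 * (gamma * (e / 3)) by field; rewrite gt_eqF.
  apply: ler_wpM2l; [by rewrite invr_ge0 ltW | lra].
have q2 : 1 / (2 * gamma) * sqn (dd k) <= e / 3.
  have -> : e / 3 = 1 / (2 * gamma) * (2 * gamma * (e / 3)) by field; rewrite gt_eqF.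
  apply: ler_wpM2l => //; by rewrite divr_ge0 // mulr_ge0 // ltW.
lra.
Qed.

Lemma avg_lower (a bq : nat -> R) (c e0 : R) K : (1 <= K)%N -> 0 < e0 ->
  (forall k, (K <= k)%N -> TT k.+1 * a k.+1 = (TT k.+1 - 1) * a k + bq k.+1) ->
  (forall k, (K <= k)%N -> c - e0 <= bq k.+1) ->
  ev (fun k => c - 2 * e0 <= a k).
Proof.
move=> hK ep Hrec Hb0.
set M := `|TT K * (a K - c + e0)|.
have M0 : 0 <= M := normr_ge0 _.
have Z : forall j, - M <= TT (K + j)%N * (a (K + j)%N - c + e0).
  elim=> [|j IH].
    by rewrite addn0 /M; have := normN_le (TT K * (a K - c + e0)); lra.
  have hk : (K <= K + j)%N by rewrite leq_addr.
  have hk1 : (1 <= K + j)%N by apply: leq_trans hK hk.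
  have r := Hrec _ hk; have bb := Hb0 _ hk.
  rewrite addnS.
  have st := TT_step hk1.
  have T1 := TT_ge1 (isT : (1 <= (K + j)%N.+1)%N).
  have e1 : TT (K + j)%N.+1 * (a (K + j)%N.+1 - c + e0)
          = (TT (K + j)%N.+1 - 1) * (a (K + j)%N - c + e0) + (bq (K + j)%N.+1 - c + e0).
    by rewrite mulrDr mulrBr r; ring.
  rewrite e1.
  have [hx|hx] := lerP 0 (a (K + j)%N - c + e0).
    have : 0 <= (TT (K + j)%N.+1 - 1) * (a (K + j)%N - c + e0) by rewrite mulr_ge0 //; lra.
    lra.
  have : TT (K + j)%N * (a (K + j)%N - c + e0) <= (TT (K + j)%N.+1 - 1) * (a (K + j)%N - c + e0).
    by rewrite ler_wnM2r //; exact: ltW.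
  lra.
have [N0 HN] := TT_big (M / e0 + 1).
exists (maxn N0 K) => k; rewrite geq_max => /andP[h1 h2].
have := Z (k - K)%N; rewrite subnKC // => hz.
have hT := HN k h1.
have T0 : 0 < TT k by apply: TT_gt0; apply: leq_trans hK h2.
have q : M <= e0 * TT k.
  have : e0 * (M / e0 + 1) <= e0 * TT k by apply: ler_wpM2l => //; exact: ltW.
  have -> : e0 * (M / e0 + 1) = M + e0 by field; rewrite gt_eqF.
  lra.
nra.
Qed.

Lemma V_phi z e : 0 < e ->
  ev (fun k => FF xo - e <= FF z + dotv (lam k) (A *m z - b)).
Proof.
move=> e0.
have e2 : 0 < e / 2 by rewrite divr_gt0.
have [K0 HK] := V_psi z e2.
have H := @avg_lower (fun k => FF z + dotv (lam k) (A *m z - b))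
   (fun k => FF z + dotv (mu k) (A *m z - b)) (FF xo) (e / 2) (maxn K0 1).
have -> : FF xo - e = FF xo - 2 * (e / 2) by field.
apply: H => //; first by rewrite leq_max orbT.
  move=> k _ /=.
  have := congr1 (fun v => dotv v (A *m z - b)) (id_l k); rewrite /= dotvDl !dotvZl => h.
  lra.
move=> k; rewrite geq_max => /andP[h1 _]; exact: HK.
Qed.

Lemma ev_near (P : nat -> Prop) : ev P -> \forall k \near \oo, P k.
Proof. by case=> N HN; exists N => // k hk; exact: HN. Qed.

Lemma main_cluster xs ls :
  cluster ((fun k => (x k, lam k)) @ \oo) (xs, ls) -> KKT_set grad A b xs ls.
Proof.
move=> cl.
have hA : A *m xs = b.
  have := @cluster_ge R _ (fun k => (x k, lam k)) (xs, ls)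
     (fun q => - sqn (A *m q.1 - b)) 0 cl.
  have hc : (fun q : 'cV[R]_n * 'cV[R]_m => - sqn (A *m q.1 - b)) z @[z --> (xs, ls)]
            --> - sqn (A *m xs - b).
    apply: cvgN; rewrite /sqn.
    have h1 := ECont_lin (A := A) (b := b) (@ECont_fst R n m (xs, ls)).
    have h2 := ECont_dotv h1 h1.
    exact: h2.
  move=> /(_ hc) /=.
  have ev1 : forall e, 0 < e -> \forall k \near \oo, 0 - e <= - sqn (A *m x k - b).
    move=> e e0; apply: ev_near; apply: ev_mono (V_y e0) => k hk /=; lra.
  move=> /(_ ev1) h.
  have : sqn (A *m xs - b) = 0 by apply/eqP; rewrite eq_le sqn_ge0 andbT; lra.
  by move/sqn_eq0/eqP; rewrite subr_eq0 => /eqP.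
have fc : (fun q : 'cV[R]_n * 'cV[R]_m => f q.1) z @[z --> (xs, ls)] --> f xs.
  apply: (cvg_comp fst f); first exact: cvg_fst.
  exact: differentiable_continuous (HC1.1 xs).1.
have hF : FF xs <= FF xo.
  have := @cluster_ge R _ (fun k => (x k, lam k)) (xs, ls)
     (fun q => - FF q.1) (- FF xo) cl.
  have hc : (fun q : 'cV[R]_n * 'cV[R]_m => - FF q.1) z @[z --> (xs, ls)] --> - FF xs.
    apply: cvgN; rewrite /FF; apply: cvgD; first exact: fc.
    apply: cvgMl_tmp; rewrite /sqn.
    exact: (ECont_dotv (ECont_lin (A := A) (b := b) (@ECont_fst R n m (xs, ls))) (ECont_lin (A := A) (b := b) (@ECont_fst R n m (xs, ls)))).
  move=> /(_ hc) /=.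
  have ev1 : forall e, 0 < e -> \forall k \near \oo, - FF xo - e <= - FF (x k).
    move=> e e0; apply: ev_near; apply: ev_mono (V_FF e0) => k hk /=; lra.
  move=> /(_ ev1) h; lra.
have hz : forall z, FF xo <= FF z + dotv ls (A *m z - b).
  move=> z.
  have := @cluster_ge R _ (fun k => (x k, lam k)) (xs, ls)
     (fun q => FF z + dotv q.2 (A *m z - b)) (FF xo) cl.
  have hc : (fun q : 'cV[R]_n * 'cV[R]_m => FF z + dotv q.2 (A *m z - b)) y @[y --> (xs, ls)]
            --> FF z + dotv ls (A *m z - b).
    apply: cvgD; first exact: cvg_cst.
    exact: (ECont_dotv (@ECont_snd R n m (xs, ls)) (@ECont_cst R _ m (A *m z - b) (xs, ls))).
  move=> /(_ hc) /=.
  have ev1 : forall e, 0 < e -> \forall k \near \oo, FF xo - e <= FF z + dotv (lam k) (A *m z - b).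
    by move=> e e0; apply: ev_near; apply: V_phi.
  by move=> /(_ ev1).
split => //.
have FFxs : FF xs = f xs by rewrite /FF hA subrr /sqn dotv0l mulr0 addr0.
apply: (fermat HC1) => v.
exists (beta / 2 * sqn (A *m v)); split.
  by rewrite mulr_ge0 ?sqn_ge0 // divr_ge0.
move=> s hs.
have := hz (xs + s *: v).
have e1 : A *m (xs + s *: v) - b = s *: (A *m v).
  by rewrite mulmxDr hA -scalemxAr addrAC subrr add0r.
rewrite [FF (_ + _)]/FF e1 sqnZ dotvZr dotv_mulmx => h.
lra.
Qed.

End Main.


Unset Implicit Arguments.

Theorem lemma4p1 (R : realType) (n m : nat)
  (f : 'cV[R]_n -> R) (grad : 'cV[R]_n -> 'cV[R]_n)
  (A : 'M[R]_(m, n)) (b : 'cV[R]_m)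
  (t : nat -> R) (rho eta gamma delta beta : R)
  (x : nat -> 'cV[R]_n) (lam : nat -> 'cV[R]_m) :
  convex_fun f ->
  C1_with_gradient f grad ->
  (exists xs ls, KKT_set grad A b xs ls) ->
  0 < rho <= 1 ->
  param_seq t rho ->
  rho <= eta <= 1 -> 0 < gamma -> 0 < delta -> 0 <= beta ->
  x 0%N = x 1%N -> lam 0%N = lam 1%N ->
  ((* Case I *)
   (forall k, (1 <= k)%N -> forall z,
      obj1 A b t eta x lam f beta gamma delta k (x k.+1)
      <= obj1 A b t eta x lam f beta gamma delta k z)
   \/
   (* Case II *)
   (exists L : R, 0 < L /\
      (forall y z, enorm (grad y - grad z) <= L * enorm (y - z)) /\
      gamma <= 1 / L /\
      (forall k, (1 <= k)%N -> forall z,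
        obj2 A b t eta x lam grad beta gamma delta k (x k.+1)
        <= obj2 A b t eta x lam grad beta gamma delta k z))) ->
  (forall k, (1 <= k)%N ->
     lam k.+1 = lbar t lam k
                + delta *: (cc t eta k *: (A *m x k.+1) - rk A b t eta x k)) ->
  forall (xs : 'cV[R]_n) (ls : 'cV[R]_m),
    cluster ((fun k => (x k, lam k)) @ \oo) (xs, ls) ->
    KKT_set grad A b xs ls.
Proof.
move=> Hcf HC1 [xo [lo HK]] Hrho Ht Heta Hg Hd Hb Hx0 Hl0 Hcase Hlam xs ls cl.
have SIall : forall k, (1 <= k)%N -> SI f A b t eta gamma beta x lam k.
  case: Hcase => [H1|H2] k hk.
  - exact: (SI_case1 (rho := rho) (delta := delta) Hcf HC1 Hrho Heta Hg Hd Hb Hlam H1 hk).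
  - exact: (SI_case2 (rho := rho) (delta := delta) Hcf HC1 Hrho Heta Hg Hd Hb Hlam H2 hk).
exact: (main_cluster Hcf HC1 HK Hrho Ht Heta Hg Hd Hb Hx0 Hl0 Hlam SIall cl).
Qed.
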